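(* Let $\mathbb{F}$ be a field of characteristic $2$. Then the identity matrix $I\in\mathfrak{gl}(n,\mathbb{F})$ can be written as a finite sum of matrices $N\in\mathfrak{gl}(n,\mathbb{F})$ with $N^2=0$ if and only if $n$ is even. *)

(* Defs.v *)
From HB Require Import structures.
From mathcomp Require Import all_boot all_order all_algebra.
Set Implicit Arguments. Unset Strict Implicit. Unset Printing Implicit Defensive.
Import GRing.Theory.
Local Open Scope ring_scope.

Definition square_zero (F : fieldType) (n : nat) (N : 'M[F]_n) : bool :=
  N *m N == 0.

(* Main.v *)
Require Import Defs.
From HB Require Import structures.
From mathcomp Require Import all_boot all_order all_algebra.
Import GRing.Theory.
From mathcomp Require Import zify.
Local Open Scope ring_scope.

Lemma tr_sqz (F : fieldType) n (N : 'M[F]_n) : N *m N = 0 -> \tr N = 0.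
Proof.
move=> NN.
have e := mulmx_base N.
rewrite -e mxtrace_mulC.
apply/eqP; rewrite -[_ == _]/(_ == _) ; apply/eqP.
suff -> : row_base N *m col_base N = 0 by rewrite mxtrace0.
apply: (row_full_inj (col_base_full N)).
apply: (row_free_inj (row_base_free N)).
by rewrite mulmx0 mul0mx -mulmxA -[in LHS]mulmxA mulmxA e NN.
Qed.

Lemma two0 (F : fieldType) (charF2 : (2 \in [pchar F])%N) n (A : 'M[F]_n) : A + A = 0.
Proof. by rewrite -mulr2n -scaler_nat (pcharf0 charF2) scale0r. Qed.

Lemma fwd (F : fieldType) (charF2 : (2 \in [pchar F])%N) (n : nat) (s : seq 'M[F]_n) :
  all (@square_zero F n) s -> \sum_(N <- s) N = 1%:M -> ~~ odd n.
Proof.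
move=> As Hs.
have : \tr (\sum_(N <- s) N) = 0.
  rewrite raddf_sum big_seq big1 // => N Ns.
  by apply: tr_sqz; apply/eqP; move/allP: As => /(_ N Ns).
rewrite Hs mxtrace1 => /eqP; rewrite -(dvdn_pcharf charF2).
by rewrite dvdn2.
Qed.
Lemma sum_one (F : fieldType) n (b : 'I_n -> bool) (k0 : 'I_n) :
  (forall k, b k -> k = k0) -> \sum_k (b k)%:R = (b k0)%:R :> F.
Proof.
move=> H; rewrite (bigD1 k0) //= big1 ?addr0 // => k /negbTE kk.
by case bk: (b k) => //; rewrite (H _ bk) eqxx in kk.
Qed.

Lemma sum_one' (F : fieldType) n (f : 'I_n -> F) (k0 : 'I_n) :
  (forall k, k != k0 -> f k = 0) -> \sum_k f k = f k0.
Proof. by move=> H; rewrite (bigD1 k0) //= big1 ?addr0 // => k /H. Qed.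

Lemma sum_none (F : fieldType) n (b : 'I_n -> bool) :
  (forall k, b k = false) -> \sum_k (b k)%:R = 0 :> F.
Proof. by move=> H; rewrite big1 // => k _; rewrite H. Qed.

Definition Lm (F : fieldType) n : 'M[F]_n :=
  \matrix_(i, j) (((i : nat) == j.+1) && ~~ odd j)%:R.
Definition Um (F : fieldType) n : 'M[F]_n :=
  \matrix_(i, j) (((j : nat) == i.+1) && ~~ odd i)%:R.

Lemma LL (F : fieldType) n : Lm F n *m Lm F n = 0.
Proof.
apply/matrixP => i j; rewrite !mxE big1 // => k _.
rewrite !mxE -natrM mulnb.
case H: (_ && _) => //; move: H => /andP[/andP[/eqP e1 o1] /andP[/eqP e2 o2]].
by move: o1; rewrite e2 /= negbK (negbTE o2).
Qed.

Lemma UU (F : fieldType) n : Um F n *m Um F n = 0.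
Proof.
apply/matrixP => i j; rewrite !mxE big1 // => k _.
rewrite !mxE -natrM mulnb.
case H: (_ && _) => //; move: H => /andP[/andP[/eqP e1 o1] /andP[/eqP e2 o2]].
by move: o2; rewrite e1 /= negbK (negbTE o1).
Qed.


Lemma LU_UL (F : fieldType) n : ~~ odd n -> Lm F n *m Um F n + Um F n *m Lm F n = 1%:M.
Proof.
move=> ev; apply/matrixP => i j; rewrite !mxE.
have Hi := ltn_ord i.
case: (boolP (odd i)) => oi.
- have lt : (i.-1 < n)%N by lia.
  rewrite (@sum_one' _ _ _ (Ordinal lt)); last first.
    move=> k; rewrite !mxE -val_eqE /= => nk.
    case: eqP => e; last by rewrite mul0r.
    by exfalso; move/eqP: nk; apply; rewrite /= e.
  rewrite big1 ?addr0; last first.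
    by move=> k _; rewrite !mxE oi /= andbF mul0r.
  have e : i.-1.+1 = i by lia.
  have o : ~~ odd i.-1 by move: oi e; case: (i : nat) => //= m; rewrite negbK.
  rewrite !mxE /= e o eqxx /= mul1r -val_eqE /= eq_sym.
  by rewrite andbT.
- have lt2 : (i.+1 < n)%N.
    have : (i.+1 != n)%N by apply/eqP => e; move: ev; rewrite -e /= oi.
    lia.
  rewrite [X in X + _]big1 ?add0r; last first.
    move=> k _; rewrite !mxE.
    case: eqP => [e|]; last by rewrite mul0r.
    by move: oi; rewrite e /= negbK => ->; rewrite mul0r.
  rewrite (@sum_one' _ _ _ (Ordinal lt2)); last first.
    move=> k; rewrite !mxE -val_eqE /= => nk.
    by rewrite (negbTE nk) mul0r.
  rewrite !mxE /= oi eqxx /= mul1r -val_eqE /=.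
  rewrite eqSS; case: eqP => [e|] //=.
  by rewrite -e oi.
Qed.

Theorem corollary2 (F : fieldType) (charF2 : (2 \in [pchar F])%N) (n : nat) :
  (exists s : seq 'M[F]_n,
      all (@square_zero F n) s /\ \sum_(N <- s) N = 1%:M)
  <-> ~~ odd n.
Proof.
split; first by case=> s [As Hs]; exact: fwd charF2 n s As Hs.
move=> ev.
exists [:: 1%:M + (Lm F n + Um F n); Lm F n; Um F n]; split.
  rewrite /= /square_zero LL UU eqxx /= andbT.
  rewrite mulmxDl !mulmxDr !mul1mx !mulmx1 !mulmxDl LL UU add0r addr0.
  rewrite [_ *m _ + _]addrC LU_UL // addrA -(addrA 1%:M) (two0 _ charF2) addr0.
  by rewrite two0.
rewrite !big_cons big_nil addr0 -addrA.
by rewrite (two0 _ charF2) addr0.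
Qed.
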